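(* Let $\mathcal{M}=(S,A,\Delta,T,\rho)$ be a w\~pMDP whose target states are $T=\{t_0,\dots,t_n\}$ with $0=\rho(t_0)<\rho(t_1)<\dots<\rho(t_n)$, and let $\mathcal{G}(\mathcal{M})=(V,E)$. Let $\mathcal{N}$ be the \~pMDP obtained from $\mathcal{M}$ by adding two fresh states $\mathit{fin},\mathit{fail}$ (the only target states of $\mathcal{N}$), a fresh action $a\notin A$, keeping all transitions of $\Delta$, and adding the transitions $(t_i,a,\mathit{fin})$ and $(t_i,a,t_{i-1})$ for every $i\in\{1,\dots,n\}$ and $(t_0,a,\mathit{fail})$ (so each $t_i$ is a non-target state of $\mathcal{N}$). Then for every $v\in V$ and every $W\subseteq V$: $v\trianglelefteq W$ holds in $\mathcal{M}$ if and only if $v\trianglelefteq W$ holds in $\mathcal{N}$.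
   Context: A weighted parametric MDP (wpMDP) is $(S,A,X,\delta,T,\rho)$: finite states $S$, actions $A$, parameters $X$, targets $T\subseteq S$ (no outgoing transitions), $\delta:(S\setminus T)\times A\times S\to\mathbb{Q}[X]$, weights $\rho:T\to\mathbb{Q}$. A weighted trivially parametric MDP (w\~pMDP) is a wpMDP where every $\delta(s,a,s')$ is either syntactically $0$ or a parameter used on no other transition; it is written $(S,A,\Delta,T,\rho)$ with $\Delta\subseteq (S\setminus T)\times A\times S$ the set of transitions with nonzero polynomial. A \~pMDP is a w\~pMDP with $T=\{\mathit{fin},\mathit{fail}\}$, $\rho(\mathit{fin})=1$, $\rho(\mathit{fail})=0$. Its graph $\mathcal{G}=(V,E)$ has $V=S\cup((S\setminus T)\times A)$, an edge $((s,a),s')$ iff $(s,a,s')\in\Delta$, and an edge $(s,(s,a))$ iff $(s,a,s')\in\Delta$ for some $s'$ other than the zero-weight target $\mathit{fail}$; $vE$ is the successor set. Graph-preserving valuations are exactly the assignments, to every $(s,a)$ with $s\notin T$, of a probability distribution with full support on $\{s':(s,a,s')\in\Delta\}$ (if this set is empty, $(s,a)$ moves to the zero-weight target with probability $1$). A strategy $\sigma:S\setminus T\to A$ and a valuation $\mathsf{val}$ induce a Markov chain; $\mathrm{Rew}^\sigma_{\mathsf{val}}(s)=\sum_{t\in T}\rho(t)\mathbb{P}^s[\Diamond t]$ for states, $\mathrm{Rew}^\sigma_{\mathsf{val}}((s,a))=\sum_{s'}\mathsf{val}_{(s,a)}(s')\mathrm{Rew}^\sigma_{\mathsf{val}}(s')$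 for state-action pairs, and $\mathrm{Rew}^*_{\mathsf{val}}(v)=\max_\sigma\mathrm{Rew}^\sigma_{\mathsf{val}}(v)$. Never-worse relation: $v\trianglelefteq W$ iff for every graph-preserving valuation $\mathsf{val}$ there is $w\in W$ with $\mathrm{Rew}^*_{\mathsf{val}}(v)\le\mathrm{Rew}^*_{\mathsf{val}}(w)$. *)

(* Defs.v *)
From HB Require Import structures.
From mathcomp Require Import all_boot all_order all_algebra.
From mathcomp Require Import classical_sets reals Rstruct.
From Stdlib Require Rdefinitions.

Set Implicit Arguments.
Unset Strict Implicit.
Unset Printing Implicit Defensive.

Import Order.TTheory GRing.Theory Num.Theory.
Local Open Scope ring_scope.

Notation Real := Rdefinitions.R.

Section Chain.
Variable S : finType.
Variable P : S -> S -> Real.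

Fixpoint reachn (k : nat) (s t : S) : Real :=
  if k is k'.+1 then
    (if s == t then 1 else \sum_(s' : S) P s s' * reachn k' s' t)
  else (s == t)%:R.

Definition reach (s t : S) : Real := sup (range (fun k => reachn k s t)).
End Chain.

(*  - T : set of target states, rho : weights (only used on T);              *)
(*  - z : the zero-weight target to which a pair (s,a) without successors    *)
(*        moves with probability 1.                                          *)
(* Strategies are (memoryless deterministic) functions S -> A; their values  *)
(* on target states are irrelevant.                                          *)
Section WpMDP.
Variables (S A : finType) (D : S -> A -> S -> bool) (T : {set S})
          (rho : S -> rat) (z : S).

Definition graph_preserving (val : S -> A -> S -> Real) : Prop :=
  forall s a, s \notin T -> [exists s', D s a s'] ->
    [/\ forall s', D s a s' -> 0 < val s a s',
        forall s', ~~ D s a s' -> val s a s' = 0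
      & \sum_(s' : S) val s a s' = 1].

Definition row (val : S -> A -> S -> Real) (s : S) (a : A) (s' : S) : Real :=
  if [exists s'', D s a s''] then val s a s' else (s' == z)%:R.

Definition chain (val : S -> A -> S -> Real) (sigma : {ffun S -> A})
    (s s' : S) : Real :=
  if s \in T then (s' == s)%:R else row val s (sigma s) s'.

(* vertices of the graph G: V = S u ((S \ T) x A) *)
Definition vertex := (S + S * A)%type.

Definition is_vertex (v : vertex) : bool :=
  match v with inl _ => true | inr sa => sa.1 \notin T end.

Definition RewS (val : S -> A -> S -> Real) (sigma : {ffun S -> A}) (s : S)
  : Real :=
  \sum_(t in T) ratr (rho t) * reach (chain val sigma) s t.

Definition Rew (val : S -> A -> S -> Real) (sigma : {ffun S -> A})
    (v : vertex) : Real :=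
  match v with
  | inl s => RewS val sigma s
  | inr (s, a) => \sum_(s' : S) row val s a s' * RewS val sigma s'
  end.

(* Rew*_val(v) = max_sigma Rew^sigma_val(v)  (0 if there is no strategy,    *)
(* which cannot happen when A is nonempty).                                  *)
Definition Rstar (val : S -> A -> S -> Real) (v : vertex) : Real :=
  match [pick sigma : {ffun S -> A}] with
  | Some sigma0 =>
      \big[Num.max/Rew val sigma0 v]_(sigma : {ffun S -> A}) Rew val sigma v
  | None => 0
  end.

Definition never_worse (v : vertex) (W : {set vertex}) : Prop :=
  forall val, graph_preserving val ->
    exists2 w, w \in W & Rstar val v <= Rstar val w.

Definition targets_absorbing : Prop :=
  forall t a s', t \in T -> ~~ D t a s'.

End WpMDP.

(* Targets of M are t 0, ..., t n.  States of N: S + bool, with              *)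
(* inr true = fin and inr false = fail; actions of N: option A, with         *)
(* None = the fresh action a.                                               *)
Section Construction.
Variables (S A : finType) (D : S -> A -> S -> bool) (n : nat)
          (t : 'I_n.+1 -> S).

Definition NS := (S + bool)%type.
Definition NA := option A.
Definition fin : NS := inr true.
Definition fail : NS := inr false.

Definition ND (x : NS) (b : NA) (y : NS) : bool :=
  match x, b, y with
  | inl s, Some b', inl s' => D s b' s'
  | inl s, None, inr true => [exists i : 'I_n.+1, leq 1 i && (s == t i)]
  | inl s, None, inl s' =>
      [exists i : 'I_n.+1, [&& leq 1 i, s == t i & s' == t (inord i.-1)]]
  | inl s, None, inr false => s == t ord0
  | _, _, _ => false
  end.

Definition NT : {set NS} := [set fin; fail].

Definition Nrho (x : NS) : rat := if x == fin then 1 else 0.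

Definition embed_vertex (v : vertex S A) : vertex NS NA :=
  match v with
  | inl s => inl (inl s)
  | inr (s, a) => inr (inl s, Some a)
  end.

Definition embed_set (W : {set vertex S A}) : {set vertex NS NA} :=
  embed_vertex @: W.

End Construction.

(* Main.v *)
Require Import Defs.
From HB Require Import structures.
From mathcomp Require Import all_boot all_order all_algebra.
From mathcomp Require Import classical_sets reals Rstruct boolp.
From mathcomp Require Import ring lra.
Import Order.TTheory GRing.Theory Num.Theory.
Local Open Scope ring_scope.

Set Implicit Arguments.
Unset Strict Implicit.
Unset Printing Implicit Defensive.
Notation RR := Rdefinitions.R.

Section Helpers.


Lemma bigmax_le (I : finType) (P : pred I) (F : I -> RR) x0 c :
  x0 <= c -> (forall i, P i -> F i <= c) -> \big[Num.max/x0]_(i | P i) F i <= c.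
Proof.
move=> h0 hF; apply: (big_ind (fun x => x <= c)) => //.
by move=> x y hx hy; rewrite ge_max hx hy.
Qed.

Lemma le_bigmax (I : finType) (P : pred I) (F : I -> RR) x0 i :
  P i -> F i <= \big[Num.max/x0]_(j | P j) F j.
Proof. by move=> Pi; rewrite (bigD1 i) //= le_max lexx. Qed.

Lemma idx_le_bigmax (I : finType) (P : pred I) (F : I -> RR) x0 :
  x0 <= \big[Num.max/x0]_(j | P j) F j.
Proof.
apply: (big_rec (fun x => x0 <= x)) => // i x _ hx.
by rewrite le_max hx orbT.
Qed.

Lemma bigmax_attained (I : finType) (F : I -> RR) (i0 : I) :
  (forall i, 0 <= F i) -> exists i, \big[Num.max/0]_i F i = F i.
Proof.
move=> F0.
have: (\big[Num.max/0]_i F i == 0) || [exists i, \big[Num.max/0]_i F i == F i].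
  apply: (big_ind (fun x => (x == 0) || [exists i, x == F i])).
  - by rewrite eqxx.
  - move=> x y /orP[/eqP->|/existsP[i /eqP->]] /orP[/eqP->|/existsP[j /eqP->]].
    + by rewrite maxxx eqxx.
    + by apply/orP; right; apply/existsP; exists j; rewrite (max_r (F0 j)).
    + by apply/orP; right; apply/existsP; exists i; rewrite (max_l (F0 i)).
    + apply/orP; right; apply/existsP.
      by case: (leP (F i) (F j)) => h; [exists j|exists i].
  - by move=> i _; apply/orP; right; apply/existsP; exists i.
case/orP=> [/eqP h|/existsP[i /eqP h]]; last by exists i.
exists i0; apply/eqP; rewrite eq_le h F0 ?andbT /=.
by rewrite -h; apply: le_bigmax.
Qed.

Lemma sum_dirac (I : finType) (s : I) (f : I -> RR) :
  \sum_(s' : I) (s' == s)%:R * f s' = f s.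
Proof.
rewrite (bigD1 s) //= eqxx mul1r big1 ?addr0 // => s' /negbTE ->.
by rewrite mul0r.
Qed.

Lemma sum_dirac_c (I : finType) (s : I) (c : RR) :
  \sum_(s' : I) (s' == s)%:R * c = c.
Proof. exact: (sum_dirac s (fun _ => c)). Qed.

Lemma avg_eq (I : finType) (p g : I -> RR) m :
  (forall i, 0 <= p i) -> \sum_i p i = 1 ->
  (forall i, 0 < p i -> g i <= m) -> \sum_i p i * g i = m ->
  forall i, 0 < p i -> g i = m.
Proof.
move=> p0 p1 gm hs.
have h0 : \sum_i p i * (m - g i) = 0.
  under eq_bigr do rewrite mulrBr.
  by rewrite sumrB -mulr_suml p1 mul1r hs subrr.
have hn : forall i, true -> 0 <= p i * (m - g i).
  move=> i _; have := p0 i; rewrite le_eqVlt => /orP[/eqP<-|pi].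
    by rewrite mul0r.
  by rewrite mulr_ge0 ?subr_ge0 ?(ltW pi) ?gm.
move=> i pi; have H := @psumr_eq0P _ _ _ _ hn h0 i isT.
by move/eqP: H; rewrite mulf_eq0 (gt_eqF pi) /= subr_eq0 => /eqP ->.
Qed.

Lemma mono_le (a : nat -> RR) : (forall k, a k <= a k.+1) ->
  forall m n, (m <= n)%N -> a m <= a n.
Proof.
move=> ha m n /subnK <-; elim: (n - m)%N => [|d IH]; first by rewrite add0n.
by apply: le_trans IH _; rewrite addSn ha.
Qed.

Lemma exists_argmax (I : finType) (F : I -> RR) (P : pred I) i0 : P i0 ->
  exists i, P i /\ forall j, P j -> F j <= F i.
Proof. by move=> Pi0; case: (arg_maxP F Pi0) => i Pi H; exists i; split. Qed.

Lemma exists_argminn (I : finType) (F : I -> nat) (P : pred I) i0 : P i0 ->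
  exists i, P i /\ forall j, P j -> (F i <= F j)%N.
Proof. by move=> Pi0; case: (arg_minnP F Pi0) => i Pi H; exists i; split. Qed.

Definition supn (a : nat -> RR) : RR := sup (range a).

Lemma supn_ub (a : nat -> RR) B : (forall k, a k <= B) -> forall k, a k <= supn a.
Proof.
move=> hB k; apply: ub_le_sup; last by exists k.
by exists B => _ [j _ <-].
Qed.

Lemma supn_le (a : nat -> RR) x : (forall k, a k <= x) -> supn a <= x.
Proof.
move=> hx; apply: ge_sup; first by exists (a 0%N), 0%N.
by move=> _ [j _ <-].
Qed.

Lemma supn_adh (a : nat -> RR) B e : (forall k, a k <= B) -> 0 < e ->
  exists k, supn a - e < a k.
Proof.
move=> hB e0.
have hs : has_sup (range a).
  split; first by exists (a 0%N), 0%N.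
  by exists B => _ [j _ <-].
have [y [k _ <-] hy] := sup_adherent e0 hs.
by exists k.
Qed.

Lemma sum_sup_le (I : finType) (P : pred I) (c : I -> RR) (a : I -> nat -> RR) B X :
  (forall i, P i -> 0 <= c i) -> (forall i k, a i k <= a i k.+1) -> (forall i k, a i k <= B) ->
  (forall k, \sum_(i | P i) c i * a i k <= X) ->
  \sum_(i | P i) c i * supn (a i) <= X.
Proof.
move=> c0 am aB hX; apply/ler_addgt0Pr => e e0.
set C := \sum_(i | P i) c i + 1.
have C0 : 0 < C by rewrite ltr_wpDl ?sumr_ge0.

have eps0 : 0 < e / C by rewrite divr_gt0.
have : forall i, exists k, supn (a i) - e / C < a i k.
  by move=> i; apply: (supn_adh (aB i)).
move/choice=> [f hf].
set K := (\max_(i : I) f i)%N.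
apply: (le_trans (y := \sum_(i | P i) c i * (a i K + e / C))).
  apply: ler_sum => i Pi; apply: ler_wpM2l; first exact: c0.
  rewrite -lerBlDr; apply: ltW; apply: (lt_le_trans (hf i)).
  by apply: mono_le => //; apply: (leq_bigmax i).
under eq_bigr do rewrite mulrDr.
rewrite big_split /=; apply: lerD; first exact: hX.
rewrite -mulr_suml mulrA ler_pdivrMr // [X in X <= _]mulrC ler_pM2l // /C.
by rewrite lerDl.
Qed.

End Helpers.

Section ChainFacts.
Variables (S : finType) (P : S -> S -> RR).
Hypothesis P0 : forall s s', 0 <= P s s'.
Hypothesis P1 : forall s, \sum_s' P s s' = 1.

Lemma reachn_ge0 k s t : 0 <= reachn P k s t.
Proof.
elim: k s => [|k IH] s /=; first by case: (s == t).
case: ifP => _ //; apply: sumr_ge0 => s' _; exact: mulr_ge0.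
Qed.

Lemma reachn_le1 k s t : reachn P k s t <= 1.
Proof.
elim: k s => [|k IH] s /=; first by case: (s == t).
case: ifP => _ //; rewrite -(P1 s); apply: ler_sum => s' _.
by rewrite -[X in _ <= X]mulr1; apply: ler_wpM2l.
Qed.

Lemma reachn_mono k s t : reachn P k s t <= reachn P k.+1 s t.
Proof.
elim: k s => [|k IH] s /=.
  case: (s == t) => //=; apply: sumr_ge0 => s' _; apply: mulr_ge0 => //; case: (s' == t).
case: ifP => // _; apply: ler_sum => s' _; exact: ler_wpM2l.
Qed.

Lemma reach_ub k s t : reachn P k s t <= reach P s t.
Proof. exact: (supn_ub (fun k => reachn_le1 k s t)). Qed.

Lemma reach_le s t x : (forall k, reachn P k s t <= x) -> reach P s t <= x.
Proof. exact: supn_le. Qed.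

Lemma reachn_abs s t k : (forall s', P s s' = (s' == s)%:R) ->
  reachn P k s t = (s == t)%:R.
Proof.
move=> hs; elim: k => [|k IH] //=.
case: ifP => // st; under eq_bigr do rewrite hs.
by rewrite sum_dirac IH st.
Qed.

End ChainFacts.

Lemma reach_abs (S : finType) (P : S -> S -> RR) s t :
  (forall s s', 0 <= P s s') -> (forall s, \sum_s' P s s' = 1) ->
  (forall s', P s s' = (s' == s)%:R) -> reach P s t = (s == t)%:R.
Proof.
move=> P0 P1 hs; apply/eqP; rewrite eq_le; apply/andP; split.
  by apply: reach_le => k; rewrite reachn_abs.
by rewrite -(reachn_abs t 0 hs); apply: (reach_ub P0 P1).
Qed.

Section MDP.
Variables (S A : finType) (D : S -> A -> S -> bool) (T : {set S})
  (rho : S -> rat) (z : S) (val : S -> A -> S -> RR).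
Hypothesis Hgp : graph_preserving D T val.
Hypothesis Hrho : forall t, t \in T -> 0 <= rho t.

Local Notation Pr := (Defs.row D z val).
Definition wt (t : S) : RR := ratr (rho t).
Definition Qf (f : S -> RR) s a := \sum_s' Pr s a s' * f s'.
Local Notation ch := (chain D T z val).
Local Notation U := (RewS D T rho z val).
Definition Gk (σ : {ffun S -> A}) k s := \sum_(t in T) wt t * reachn (ch σ) k s t.

Lemma wt_ge0 t : t \in T -> 0 <= wt t.
Proof. by move=> tT; rewrite /wt ler0q Hrho. Qed.

Lemma Pr_ge0 s a s' : s \notin T -> 0 <= Pr s a s'.
Proof.
move=> sT; rewrite /Defs.row; case: ifP => Hex; last by case: (s' == z).
have [h1 h2 _] := @Hgp s a sT Hex.
by case: (boolP (D s a s')) => d; [exact: ltW (h1 _ d)|rewrite h2].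
Qed.

Lemma Pr_sum1 s a : s \notin T -> \sum_s' Pr s a s' = 1.
Proof.
move=> sT; rewrite /Defs.row; have [Hex|Hex] := boolP [exists s'', D s a s''].
  by have [_ _ ->] := @Hgp s a sT Hex.
under eq_bigr do rewrite -[_%:R]mulr1.
by rewrite sum_dirac.
Qed.

Lemma ch_ge0 σ s s' : 0 <= ch σ s s'.
Proof.
rewrite /chain; case: ifP => sT; first by case: (s' == s).
by apply: Pr_ge0; rewrite sT.
Qed.

Lemma ch_sum1 σ s : \sum_s' ch σ s s' = 1.
Proof.
rewrite /chain; have [sT|sT] := boolP (s \in T).
  by under eq_bigr do rewrite -[_%:R]mulr1; rewrite sum_dirac.
by apply: Pr_sum1.
Qed.

Lemma sum_T_dirac (f : S -> RR) s : s \in T ->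
  \sum_(t in T) f t * (s == t)%:R = f s.
Proof.
move=> sT; rewrite (bigD1 s) //= eqxx mulr1 big1 ?addr0 // => t /andP[_ ts].
by rewrite eq_sym (negbTE ts) mulr0.
Qed.

Lemma neq_T s t : s \notin T -> t \in T -> (s == t) = false.
Proof. by move=> sT tT; apply/negbTE; apply/eqP => st; rewrite st tT in sT. Qed.

Lemma Gk_T σ k s : s \in T -> Gk σ k s = wt s.
Proof.
move=> sT; have hs : forall s', ch σ s s' = (s' == s)%:R.
  by move=> s'; rewrite /chain sT.
rewrite /Gk; under eq_bigr => t _ do rewrite (reachn_abs t k hs).
exact: sum_T_dirac.
Qed.

Lemma Gk_0 σ s : s \notin T -> Gk σ 0 s = 0.
Proof.
move=> sT; rewrite /Gk big1 // => t tT /=.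
by rewrite neq_T // mulr0.
Qed.

Lemma Gk_S σ k s : s \notin T ->
  Gk σ k.+1 s = \sum_s' Pr s (σ s) s' * Gk σ k s'.
Proof.
move=> sT; rewrite /Gk.
have -> : \sum_(t in T) wt t * reachn (ch σ) k.+1 s t =
          \sum_(t in T) \sum_s' wt t * (Pr s (σ s) s' * reachn (ch σ) k s' t).
  apply: eq_bigr => t tT /=.
  rewrite neq_T //.
  rewrite mulr_sumr; apply: eq_bigr => s' _.
  by rewrite /chain (negbTE sT).
rewrite exchange_big /=; apply: eq_bigr => s' _.
rewrite mulr_sumr; apply: eq_bigr => t _.
by rewrite mulrCA.
Qed.

Lemma reach_ch_ub σ k s t : reachn (ch σ) k s t <= reach (ch σ) s t.
Proof. exact: reach_ub (ch_ge0 σ) (ch_sum1 σ) k s t. Qed.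

Lemma U_ge_Gk σ k s : Gk σ k s <= U σ s.
Proof.
apply: ler_sum => t tT; apply: ler_wpM2l; first exact: wt_ge0.
exact: reach_ch_ub.
Qed.

Lemma U_ge0 σ s : 0 <= U σ s.
Proof.
apply: sumr_ge0 => t tT; apply: mulr_ge0; first exact: wt_ge0.
apply: le_trans (reach_ch_ub σ 0 s t); exact: reachn_ge0 (ch_ge0 σ) 0 s t.
Qed.

Lemma U_le σ s X : (forall k, Gk σ k s <= X) -> U σ s <= X.
Proof.
move=> hX; rewrite /RewS.
apply: (sum_sup_le (B := 1)) => //.
- exact: wt_ge0.
- move=> t k; exact: reachn_mono (ch_ge0 σ) k s t.
- move=> t k; exact: reachn_le1 (ch_ge0 σ) (ch_sum1 σ) k s t.
Qed.

Lemma U_T σ s : s \in T -> U σ s = wt s.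
Proof.
move=> sT; have hs : forall s', ch σ s s' = (s' == s)%:R.
  by move=> s'; rewrite /chain sT.
rewrite /RewS; under eq_bigr => t _ do rewrite (reach_abs t (ch_ge0 σ) (ch_sum1 σ) hs).
exact: sum_T_dirac.
Qed.

Lemma U_harm σ s : s \notin T ->
  U σ s = \sum_s' Pr s (σ s) s' * U σ s'.
Proof.
move=> sT; apply/eqP; rewrite eq_le; apply/andP; split.
  apply: U_le => -[|k]; first by rewrite Gk_0 //; apply: sumr_ge0 => s' _;
    apply: mulr_ge0; [exact: Pr_ge0|exact: U_ge0].
  rewrite Gk_S //; apply: ler_sum => s' _; apply: ler_wpM2l;
    [exact: Pr_ge0|exact: U_ge_Gk].
have -> : \sum_s' Pr s (σ s) s' * U σ s' =
   \sum_(t in T) wt t * \sum_s' Pr s (σ s) s' * reach (ch σ) s' t.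
  rewrite /RewS; under eq_bigr do rewrite mulr_sumr.
  rewrite exchange_big /=; apply: eq_bigr => t _.
  rewrite mulr_sumr; apply: eq_bigr => s' _; by rewrite mulrCA.
apply: ler_sum => t tT; apply: ler_wpM2l; first exact: wt_ge0.
apply: (sum_sup_le (B := 1)) => //.
- by move=> s' _; exact: Pr_ge0.
- move=> s' k; exact: reachn_mono (ch_ge0 σ) k s' t.
- move=> s' k; exact: reachn_le1 (ch_ge0 σ) (ch_sum1 σ) k s' t.
move=> k; apply: le_trans (reach_ch_ub σ k.+1 s t).
rewrite /= neq_T //.
by apply: ler_sum => s' _; rewrite /chain (negbTE sT).
Qed.


Lemma Qf_mono (f g : S -> RR) s a : s \notin T -> (forall s', f s' <= g s') ->
  Qf f s a <= Qf g s a.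
Proof.
move=> sT hfg; apply: ler_sum => s' _; apply: ler_wpM2l; [exact: Pr_ge0|exact: hfg].
Qed.

Section Char.
Variables (h : S -> RR) (σ : {ffun S -> A}) (r : S -> nat).
Hypothesis Hh0 : forall s, 0 <= h s.
Hypothesis HhT : forall t, t \in T -> h t = wt t.
Hypothesis Hsup : forall s a, s \notin T -> Qf h s a <= h s.
Hypothesis Hharm : forall s, s \notin T -> Qf h s (σ s) = h s.
Hypothesis Hrank : forall s, s \notin T -> 0 < h s ->
  exists s', 0 < Pr s (σ s) s' /\ (s' \in T \/ h s' = 0 \/ (r s' < r s)%N).

Lemma Gk_le_h σ' k s : Gk σ' k s <= h s.
Proof.
elim: k s => [|k IH] s; (have [sT|sT] := boolP (s \in T); first by rewrite Gk_T // HhT).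
  by rewrite Gk_0.
rewrite Gk_S //; apply: le_trans (Hsup (σ' s) sT).
by apply: Qf_mono.
Qed.

Lemma char_up σ' s : U σ' s <= h s.
Proof. by apply: U_le => k; exact: Gk_le_h. Qed.

Lemma char_eq s : U σ s = h s.
Proof.
pose g x := h x - U σ x.
have g0 : forall x, 0 <= g x by move=> x; rewrite subr_ge0 char_up.
have gT : forall x, x \in T -> g x = 0 by move=> x xT; rewrite /g U_T // HhT // subrr.
have gh : forall x, h x = 0 -> g x = 0.
  move=> x hx; apply/eqP; rewrite eq_le g0 andbT /g hx sub0r oppr_le0; exact: U_ge0.
have gharm : forall x, x \notin T -> g x = \sum_s' Pr x (σ x) s' * g s'.
  move=> x xT; rewrite /g -{1}(Hharm xT) (U_harm _ xT) /Qf -sumrB.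
  by apply: eq_bigr => s' _; rewrite mulrBr.
suff gle : forall x, g x <= 0.
  by apply/eqP; rewrite eq_le char_up /= -subr_le0; exact: gle.
move=> x; rewrite leNgt; apply/negP => gx.
have [y [_ ymax]] := exists_argmax g (erefl true : xpredT x).
have gy : 0 < g y by apply: lt_le_trans gx (ymax x isT).
have [y1 [/eqP y1e y1min]] := @exists_argminn S r (fun q => g q == g y) y (eqxx _).
have y1T : y1 \notin T by apply/negP => yT; move: gy; rewrite -y1e gT // ltxx.
have hy1 : 0 < h y1.
  rewrite lt_neqAle Hh0 andbT; apply/eqP => h0; move: gy.
  by rewrite -y1e gh ?ltxx.
have [s' [hp hs']] := Hrank y1T hy1.
have gs' : g s' = g y.
  apply: (avg_eq (p := Pr y1 (σ y1)) (g := g)) hp.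
  - by move=> q; apply: Pr_ge0.
  - exact: Pr_sum1.
  - by move=> q _; exact: ymax.
  - by rewrite -gharm.
case: hs' => [s'T|[h0|rlt]].
- by move: gy; rewrite -gs' gT // ltxx.
- by move: gy; rewrite -gs' gh // ltxx.
- by have := y1min s' (introT eqP gs'); rewrite leqNgt rlt.
Qed.

Lemma Rstar_char v c : (forall σ', Rew D T rho z val σ' v <= c) ->
  (exists σ', Rew D T rho z val σ' v = c) -> Rstar D T rho z val v = c.
Proof.
move=> hle [σ0 h0]; rewrite /Rstar; case: pickP => [σ1 _|H]; last by have := H σ0.
apply/eqP; rewrite eq_le; apply/andP; split.
  by apply: bigmax_le => [|σ' _]; apply: hle.
rewrite -h0; exact: (@le_bigmax _ (fun _ => true) (fun σ => Rew D T rho z val σ v) _ σ0).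
Qed.

Lemma Rstar_state s : Rstar D T rho z val (inl s) = h s.
Proof.
by apply: Rstar_char => [σ'|]; [exact: char_up|exists σ; exact: char_eq].
Qed.

Lemma Rstar_pair s a : s \notin T -> Rstar D T rho z val (inr (s, a)) = Qf h s a.
Proof.
move=> sT; apply: Rstar_char => [σ'|].
  by apply: Qf_mono => // s'; exact: char_up.
by exists σ; rewrite /= /Qf; apply: eq_bigr => s' _; rewrite char_eq.
Qed.

End Char.

Section Exist.
Variable a0 : A.

Fixpoint VI k s : RR :=
  if s \in T then wt s else
  if k is k'.+1 then \big[Num.max/0]_a Qf (VI k') s a else 0.

Definition Bnd : RR := \big[Num.max/0]_(t in T) wt t.

Lemma VI_ge0 k s : 0 <= VI k s.
Proof.
case: k => [|k] /=; case: ifP => sT //; first exact: wt_ge0.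
  exact: wt_ge0.
exact: idx_le_bigmax.
Qed.

Lemma VI_leB k s : VI k s <= Bnd.
Proof.
elim: k s => [|k IH] s /=; case: ifP => sT; try by apply: le_bigmax.
  exact: idx_le_bigmax.
apply: bigmax_le => [|a _]; first exact: idx_le_bigmax.
rewrite /Qf -[Bnd]mul1r -(@Pr_sum1 s a) ?sT // mulr_suml.
by apply: ler_sum => s' _; apply: ler_wpM2l; [apply: Pr_ge0; rewrite sT|exact: IH].
Qed.

Lemma VI_mono k s : VI k s <= VI k.+1 s.
Proof.
elim: k s => [|k IH] s /=; case: ifP => sT //; first exact: idx_le_bigmax.
apply: bigmax_le => [|a _]; first exact: idx_le_bigmax.
apply: le_trans (@le_bigmax _ (fun _ => true) (fun a => Qf (VI k.+1) s a) 0 a isT).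
by apply: Qf_mono; [rewrite sT|exact: IH].
Qed.

Definition Vs s := supn (fun k => VI k s).

Lemma Vs_ub k s : VI k s <= Vs s.
Proof. exact: (supn_ub (fun k => VI_leB k s)). Qed.

Lemma Vs_ge0 s : 0 <= Vs s.
Proof. exact: le_trans (VI_ge0 0 s) (Vs_ub 0 s). Qed.

Lemma Vs_T s : s \in T -> Vs s = wt s.
Proof.
move=> sT; apply/eqP; rewrite eq_le; apply/andP; split.
  by apply: supn_le => k; case: k => [|k] /=; rewrite sT.
by have := Vs_ub 0 s; rewrite /= sT.
Qed.

Lemma Vs_sup s a : s \notin T -> Qf Vs s a <= Vs s.
Proof.
move=> sT; rewrite /Qf; apply: (sum_sup_le (B := Bnd)).
- by move=> s' _; exact: Pr_ge0.
- by move=> s' k; exact: VI_mono.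
- by move=> s' k; exact: VI_leB.
move=> k; apply: le_trans (Vs_ub k.+1 s); rewrite /= (negbTE sT).
exact: (@le_bigmax _ (fun _ => true) (fun a => Qf (VI k) s a) 0 a isT).
Qed.

Lemma Vs_bell s : s \notin T -> Vs s = \big[Num.max/0]_a Qf Vs s a.
Proof.
move=> sT; apply/eqP; rewrite eq_le; apply/andP; split.
  apply: supn_le => -[|k] /=; rewrite (negbTE sT); first exact: idx_le_bigmax.
  apply: bigmax_le => [|a _]; first exact: idx_le_bigmax.
  apply: le_trans (@le_bigmax _ (fun _ => true) (fun a => Qf Vs s a) 0 a isT).
  by apply: Qf_mono => // s'; exact: Vs_ub.
apply: bigmax_le => [|a _]; first exact: Vs_ge0.
exact: Vs_sup.
Qed.

Lemma opt_exists s : s \notin T -> exists a, Qf Vs s a = Vs s.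
Proof.
move=> sT; have [a ha] := @bigmax_attained A (fun a => Qf Vs s a) a0
  (fun a => sumr_ge0 _ (fun s' _ => mulr_ge0 (Pr_ge0 a s' sT) (Vs_ge0 s'))).
by exists a; rewrite Vs_bell // ha.
Qed.

Fixpoint Dj j s : bool :=
  if j is j'.+1 then
    Dj j' s || [exists a, (Qf Vs s a == Vs s) &&
                  [exists s', (0 < Pr s a s') && Dj j' s']]
  else (s \in T) || (Vs s == 0).

Lemma Dj_all s : exists j, Dj j s.
Proof.
case: (pselect (exists j, Dj j s)) => // Hn; exfalso.
pose Z := [set x | ~~ `[< exists j, Dj j x >]].
have inZ x : (x \in Z) = ~~ `[< exists j, Dj j x >] by rewrite inE.
have Zprop x : x \in Z -> x \notin T /\ 0 < Vs x.
  rewrite inZ => /asboolPn hx.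
  have : ~~ Dj 0 x by apply/negP => d; apply: hx; exists 0%N.
  rewrite /= negb_or => /andP[xT v0]; split => //.
  by rewrite lt_neqAle eq_sym v0 Vs_ge0.
have Zsucc x a s' : x \in Z -> Qf Vs x a = Vs x -> 0 < Pr x a s' -> s' \in Z.
  rewrite !inZ => /asboolPn hx ha hp; apply/asboolPn => -[j hj]; apply: hx.
  exists j.+1 => /=; apply/orP; right; apply/existsP; exists a.
  rewrite ha eqxx /=; apply/existsP; exists s'; by rewrite hp hj.
have sZ : s \in Z by rewrite inZ; apply/asboolPn.
have [s1 [s1Z s1max]] := exists_argmax Vs (P := fun x => x \in Z) sZ.
set m := Vs s1.
have [s1T m0] := Zprop _ s1Z.
pose Zm := [set x | (x \in Z) && (Vs x == m)].
have inZm x : (x \in Zm) = (x \in Z) && (Vs x == m) by rewrite !inE.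
have s1Zm : s1 \in Zm by rewrite inZm s1Z eqxx.
have Zmsucc x a s' : x \in Zm -> Qf Vs x a = Vs x -> 0 < Pr x a s' -> s' \in Zm.
  rewrite inZm => /andP[xZ /eqP xm] ha hp.
  have s'Z := Zsucc _ _ _ xZ ha hp.
  rewrite inZm s'Z /=; apply/eqP.
  have [xT _] := Zprop _ xZ.
  apply: (avg_eq (p := Pr x a) (g := Vs)) hp.
  - by move=> y; apply: Pr_ge0.
  - exact: Pr_sum1.
  - move=> y hy; apply: s1max; exact: Zsucc _ _ _ xZ ha hy.
  - by rewrite -xm.
pose c := \big[Num.min/m]_(p : S * A | (p.1 \in Zm) && (Qf Vs p.1 p.2 != Vs p.1))
            (m - Qf Vs p.1 p.2).
have c0 : 0 < c.
  apply: (big_ind (fun x => 0 < x)) => //.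
    by move=> x y hx hy; rewrite lt_min hx hy.
  move=> [x a] /andP[xZm hne] /=; rewrite subr_gt0.
  move: xZm; rewrite inZm => /andP[xZ /eqP xm]; have [xT _] := Zprop _ xZ.
  by rewrite -xm lt_neqAle hne Vs_sup.
have cm : c <= m.
  apply: (big_rec (fun x => x <= m)) => // i x _ hx.
  by rewrite ge_min hx orbT.
have cle x a : x \in Zm -> Qf Vs x a != Vs x -> c <= m - Qf Vs x a.
  move=> xZm hne; rewrite /c (bigD1 (x, a)) /= ?xZm ?hne //.
  by rewrite ge_min lexx.
have bound k : forall x, x \in Zm -> VI k x <= m - c.
  elim: k => [|k IH] x xZm;
    have xZ : x \in Z by move: xZm; rewrite inZm => /andP[].
    have [xT _] := Zprop _ xZ.
    by rewrite /= (negbTE xT) subr_ge0.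
  have [xT _] := Zprop _ xZ.
  rewrite /= (negbTE xT); apply: bigmax_le => [|a _]; first by rewrite subr_ge0.
  have [ha|ha] := eqVneq (Qf Vs x a) (Vs x).
    rewrite /Qf -[m - c]mul1r -(Pr_sum1 a xT) mulr_suml; apply: ler_sum => s' _.
    have := Pr_ge0 a s' xT; rewrite le_eqVlt => /orP[/eqP<-|hp].
      by rewrite !mul0r.
    by apply: ler_wpM2l; [exact: ltW|apply: IH; exact: Zmsucc _ _ _ xZm ha hp].
  apply: le_trans (Qf_mono a xT (Vs_ub k)) _.
  have := cle _ _ xZm ha; lra.
have : m <= m - c.
  by rewrite {1}/m; apply: supn_le => k; exact: bound k s1 s1Zm.
lra.
Qed.

Lemma char_exists : exists (h : S -> RR) (σ : {ffun S -> A}) (r : S -> nat),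
  [/\ forall s, 0 <= h s, forall t, t \in T -> h t = wt t,
      forall s a, s \notin T -> Qf h s a <= h s,
      forall s, s \notin T -> Qf h s (σ s) = h s &
      forall s, s \notin T -> 0 < h s ->
        exists s', 0 < Pr s (σ s) s' /\ (s' \in T \/ h s' = 0 \/ (r s' < r s)%N)].
Proof.
pose r x := ex_minn (Dj_all x).
have hσ : forall x, exists a, (x \notin T -> Qf Vs x a = Vs x) /\
    (x \notin T -> 0 < Vs x ->
      exists s', 0 < Pr x a s' /\ (s' \in T \/ Vs s' = 0 \/ (r s' < r x)%N)).
  move=> x; have [xT|xT] := boolP (x \in T); first by exists a0; split.
  have [a ha] := opt_exists xT.
  have [vpos|v0] := ltP 0 (Vs x); last first.
    by exists a; split => // _ hv; move: v0; rewrite leNgt hv.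
  rewrite /r; case: ex_minnP => j hj hmin.
  case: j hj hmin => [|j] hj hmin.
    by move: hj; rewrite /= (negbTE xT) /= (gt_eqF vpos).
  move: hj => /= /orP[hj|/existsP[b /andP[/eqP hb /existsP[s' /andP[hp hs']]]]].
    by have := hmin j hj; rewrite ltnn.
  exists b; split => // _ _; exists s'; split => //; right; right.
  by case: ex_minnP => j' _ hm; apply: hm.
have [f hf] := choice hσ.
exists Vs, [ffun x => f x], r; split.
- exact: Vs_ge0.
- exact: Vs_T.
- by move=> s a sT; exact: Vs_sup.
- by move=> s sT; rewrite ffunE; case: (hf s) => ->.
- by move=> s sT hs; rewrite ffunE; case: (hf s) => _ H; exact: H sT hs.
Qed.

End Exist.
End MDP.

Section Interp.
Variables (n : nat) (Y Rh : nat -> RR).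
Hypothesis Y0 : Y 0%N = 0.
Hypothesis Rh0 : Rh 0%N = 0.
Hypothesis Yinc : forall k, (k < n)%N -> Y k < Y k.+1.
Hypothesis Rinc : forall k, (k < n)%N -> Rh k < Rh k.+1.

Lemma Y_le i j : (i <= j)%N -> (j <= n)%N -> Y i <= Y j.
Proof.
move=> ij; elim: j ij => [|j IH]; first by rewrite leqn0 => /eqP->.
rewrite leq_eqVlt => /orP[/eqP->//|]; rewrite ltnS => ij jn.
apply: le_trans (IH ij (ltnW jn)) _; exact: ltW (Yinc jn).
Qed.

Definition sl k := (Rh k.+1 - Rh k) / (Y k.+1 - Y k).

Lemma sl_gt0 k : (k < n)%N -> 0 < sl k.
Proof.
move=> kn; have := Yinc kn; have := Rinc kn => h1 h2.
by apply: divr_gt0; rewrite subr_gt0.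
Qed.

Definition epsi : RR := \big[Num.min/1]_(k < n) sl k.

Lemma epsi_gt0 : 0 < epsi.
Proof.
apply: (big_ind (fun x => 0 < x)) => //; first by move=> x y hx hy; rewrite lt_min hx hy.
by move=> k _; apply: sl_gt0.
Qed.

Lemma epsi_le k : (k < n)%N -> epsi <= sl k.
Proof.
move=> kn; rewrite /epsi (bigD1 (Ordinal kn)) //=.
by rewrite ge_min lexx.
Qed.

Definition clamp (u a b : RR) := Num.min (Num.max u a) b.

Lemma clamp_mono u v a b : u <= v -> clamp u a b <= clamp v a b.
Proof.
move=> uv; rewrite /clamp le_min ge_min ge_min lexx !orbT andbT.
by rewrite ge_max !le_max uv lexx !orbT.
Qed.

Definition phi (u : RR) : RR :=
  epsi * u + \sum_(k < n) (sl k - epsi) * (clamp u (Y k) (Y k.+1) - Y k).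

Lemma phi_strict u v : u < v -> phi u < phi v.
Proof.
move=> uv; rewrite /phi; apply: ltr_leD.
  by rewrite ltr_pM2l // epsi_gt0.
apply: ler_sum => k _; apply: ler_wpM2l; first by rewrite subr_ge0 epsi_le.
by rewrite lerD2r clamp_mono // ltW.
Qed.

Lemma phi_le u v : u <= v -> phi u <= phi v.
Proof. by rewrite le_eqVlt => /orP[/eqP->//|/phi_strict/ltW]. Qed.

Lemma phi_le_rev u v : phi u <= phi v -> u <= v.
Proof. by move=> h; rewrite leNgt; apply/negP => /phi_strict; rewrite ltNge h. Qed.

Lemma clampY k j : (k <= n)%N -> (j < n)%N ->
  clamp (Y k) (Y j) (Y j.+1) - Y j = if (j < k)%N then Y j.+1 - Y j else 0.
Proof.
move=> kn jn; rewrite /clamp; case: ifP => jk.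
  rewrite (max_l (Y_le (ltnW jk) kn)) (min_r (Y_le jk kn)) //.
have kj : (k <= j)%N by rewrite leqNgt jk.
rewrite (max_r (Y_le kj (ltnW jn))) (min_l (ltW (Yinc jn))).
by rewrite subrr.
Qed.

Lemma phi_interp k : (k <= n)%N -> phi (Y k) = Rh k.
Proof.
move=> kn; rewrite /phi.
have -> : \sum_(j < n) (sl j - epsi) * (clamp (Y k) (Y j) (Y j.+1) - Y j) =
          \sum_(0 <= j < n) (if (j < k)%N then (Rh j.+1 - Rh j) - epsi * (Y j.+1 - Y j) else 0).
  rewrite big_mkord; apply: eq_bigr => j _; rewrite clampY //.
  case: ifP => _; last by rewrite mulr0.
  by rewrite mulrBl /sl divfK // subr_eq0 gt_eqF //; exact: Yinc.
rewrite (big_cat_nat (leq0n k) kn) /=.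
rewrite [X in _ + (_ + X)](eq_big_nat _ _ (F2 := fun _ => 0)); last first.
  by move=> j /andP[kj _]; rewrite ltnNge kj.
rewrite big1_eq addr0.
rewrite (eq_big_nat _ _ (F2 := fun j => (Rh j.+1 - Rh j) - epsi * (Y j.+1 - Y j))); last first.
  by move=> j /andP[_ ->].
rewrite sumrB telescope_sumr // -mulr_sumr telescope_sumr // Y0 Rh0 !subr0.
by rewrite addrC subrK.
Qed.

Lemma phi0 : phi 0 = 0.
Proof. by rewrite -{1}Y0 phi_interp. Qed.

End Interp.

Lemma mix1 (I : finType) (P : pred I) (q g : I -> RR) (tau lam : RR) (jx : I) :
  (forall j, P j -> 0 < q j) -> (forall j, ~~ P j -> q j = 0) -> \sum_j q j = 1 ->
  P jx -> 0 < lam -> lam < 1 ->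
  lam * (\sum_j q j * g j - g jx) = tau - g jx ->
  exists p : I -> RR, [/\ forall j, P j -> 0 < p j, forall j, ~~ P j -> p j = 0,
     \sum_j p j = 1 & \sum_j p j * g j = tau].
Proof.
move=> qP qN q1 Pjx l0 l1 hl.
exists (fun j => lam * q j + (1 - lam) * (j == jx)%:R); split.
- move=> j Pj; have h1 : 0 < lam * q j by rewrite mulr_gt0 // qP.
  have h2 : 0 <= (1 - lam) * (j == jx)%:R.
    by apply: mulr_ge0; [rewrite subr_ge0 ltW|case: (j == jx)].
  lra.
- move=> j Pj; rewrite qN //; have -> : (j == jx) = false.
    by apply/negbTE; apply: contraNneq Pj => ->.
  by rewrite mulr0 mulr0 addr0.
- rewrite big_split /= -mulr_sumr q1 mulr1.
  under eq_bigr do rewrite mulrC.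
  by rewrite sum_dirac_c; ring.
- under eq_bigr do rewrite mulrDl -mulrA (mulrC (1 - lam)) -mulrA.
  rewrite big_split /= -mulr_sumr sum_dirac.
  move: hl; lra.
Qed.

Lemma lam_bounds (a b : RR) : (0 < a) && (a < b) || (b < a) && (a < 0) ->
  [/\ 0 < a / b, a / b < 1 & a / b * b = a].
Proof.
case/orP => /andP[h1 h2].
  have b0 : 0 < b by lra.
  split; first by rewrite divr_gt0.
    by rewrite ltr_pdivrMr // mul1r.
  by rewrite divfK // gt_eqF.
have e : a / b = (- a) / (- b) by rewrite invrN mulrNN.
have b0 : 0 < - b by lra.
have bn : b < 0 by lra.
split.
- by rewrite e divr_gt0 //; lra.
- by rewrite e ltr_pdivrMr // mul1r; lra.
- by rewrite divfK // lt_eqF.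
Qed.

Lemma realize_avg (I : finType) (P : pred I) (q u : I -> RR) (f : RR -> RR) :
  (forall x y, x < y -> f x < f y) ->
  (forall j, P j -> 0 < q j) -> (forall j, ~~ P j -> q j = 0) -> \sum_j q j = 1 ->
  exists p : I -> RR, [/\ forall j, P j -> 0 < p j, forall j, ~~ P j -> p j = 0,
     \sum_j p j = 1 & \sum_j p j * f (u j) = f (\sum_j q j * u j)].
Proof.
move=> fs qP qN q1; set m := \sum_j q j * u j.
have q0 : forall j, 0 <= q j.
  by move=> j; case: (boolP (P j)) => Pj; [exact: ltW (qP _ Pj)|rewrite qN].
have qpP : forall j, 0 < q j -> P j.
  by move=> j qj; apply/negPn/negP => Pj; move: qj; rewrite qN // ltxx.
case: (pselect (exists j, P j /\ u j < m)) => [[j0 [Pj0 lt0]]|H].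
  have [j1 [Pj1 lt1]] : exists j1, P j1 /\ m < u j1.
    case: (pselect (exists j1, P j1 /\ m < u j1)) => // H'; exfalso.
    have hle : forall i, 0 < q i -> u i <= m.
      move=> i qi; rewrite leNgt; apply/negP => mi; apply: H'; exists i; split => //.
      exact: qpP.
    have := avg_eq q0 q1 hle erefl (qP _ Pj0); move=> e; move: lt0; rewrite e ltxx.
    by [].
  set U := \sum_j q j * f (u j).
  case: (ltgtP U (f m)) => hU.
  - have f1 := fs _ _ lt1.
    have hab : (0 < f m - f (u j1)) && (f m - f (u j1) < U - f (u j1)) ||
               (U - f (u j1) < f m - f (u j1)) && (f m - f (u j1) < 0).
      by apply/orP; right; apply/andP; split; lra.
    have [l0 l1 hl] := lam_bounds hab.
    exact: (mix1 (g := fun j => f (u j)) qP qN q1 Pj1 l0 l1 hl).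
  - have f0 := fs _ _ lt0.
    have hab : (0 < f m - f (u j0)) && (f m - f (u j0) < U - f (u j0)) ||
               (U - f (u j0) < f m - f (u j0)) && (f m - f (u j0) < 0).
      by apply/orP; left; apply/andP; split; lra.
    have [l0 l1 hl] := lam_bounds hab.
    exact: (mix1 (g := fun j => f (u j)) qP qN q1 Pj0 l0 l1 hl).
  - by exists q; split.
case: (pselect (exists j, P j /\ u j < m)) => // _.
exists q; split => //.
have hu : forall j, 0 < q j -> u j = m.
  move=> j qj.
  have hsum : \sum_i q i * - u i = - m.
    by rewrite /m -sumrN; apply: eq_bigr => i _; rewrite mulrN.
  have hle : forall i, 0 < q i -> - u i <= - m.
    move=> i qi; rewrite lerN2 leNgt; apply/negP => lt; apply: H; exists i; split => //.
    exact: qpP.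
  have := @avg_eq I q (fun i => - u i) (- m) q0 q1 hle hsum j qj.
  exact: oppr_inj.
transitivity (\sum_j q j * f m); last by rewrite -mulr_suml q1 mul1r.
apply: eq_bigr => j _; have := q0 j; rewrite le_eqVlt => /orP[/eqP<-|qj].
  by rewrite !mul0r.
by rewrite hu.
Qed.

Definition IsChar (S A : finType) (D : S -> A -> S -> bool) (T : {set S})
  (rho : S -> rat) (z : S) (val : S -> A -> S -> RR)
  (h : S -> RR) (σ : {ffun S -> A}) (r : S -> nat) : Prop :=
  [/\ forall s, 0 <= h s, forall t, t \in T -> h t = wt rho t,
      forall s a, s \notin T -> Qf D z val h s a <= h s,
      forall s, s \notin T -> Qf D z val h s (σ s) = h s &
      forall s, s \notin T -> 0 < h s ->
        exists s', 0 < Defs.row D z val s (σ s) s' /\ (s' \in T \/ h s' = 0 \/ (r s' < r s)%N)].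

Lemma IsChar_Rstar (S A : finType) (D : S -> A -> S -> bool) (T : {set S})
  (rho : S -> rat) (z : S) (val : S -> A -> S -> RR) h σ r :
  graph_preserving D T val -> (forall t, t \in T -> 0 <= rho t) ->
  IsChar D T rho z val h σ r ->
  (forall s, Rstar D T rho z val (inl s) = h s) /\
  (forall s a, s \notin T -> Rstar D T rho z val (inr (s, a)) = Qf D z val h s a).
Proof.
move=> Hgp Hr [H1 H2 H3 H4 H5]; split.
  by move=> s; exact: (Rstar_state Hgp Hr H1 H2 H3 H4 H5).
by move=> s a sT; exact: (Rstar_pair Hgp Hr H1 H2 H3 H4 H5).
Qed.

Lemma IsChar_exists (S A : finType) (D : S -> A -> S -> bool) (T : {set S})
  (rho : S -> rat) (z : S) (val : S -> A -> S -> RR) :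
  graph_preserving D T val -> (forall t, t \in T -> 0 <= rho t) -> A ->
  exists h σ r, IsChar D T rho z val h σ r.
Proof.
move=> Hgp Hr a0; have [h [σ [r [H1 H2 H3 H4 H5]]]] := char_exists z Hgp Hr a0.
by exists h, σ, r; split.
Qed.

Section Main.
Variables (S A : finType) (D : S -> A -> S -> bool) (T : {set S})
  (rho : S -> rat) (n : nat) (t : 'I_n.+1 -> S).
Hypothesis HA : (0 < #|A|)%N.
Hypothesis Habs : targets_absorbing D T.
Hypothesis HT : T = [set t i | i : 'I_n.+1].
Hypothesis Ht0 : rho (t ord0) = 0.
Hypothesis Hmono : forall i j : 'I_n.+1, (i < j)%N -> rho (t i) < rho (t j).

Local Notation z := (t ord0).
Local Notation NDt := (ND D t).
Local Notation NTS := (NT S).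
Local Notation Nr := (Nrho (S:=S)).
Local Notation fl := (fail S).
Local Notation fn := (fin S).

Lemma exA : exists a : A, true.
Proof. by move/card_gt0P: HA => [a _]; exists a. Qed.

Lemma t_inj : injective t.
Proof.
move=> i j e; case: (ltngtP i j) => [h|h|h]; last exact: val_inj.
  by have := Hmono h; rewrite e ltxx.
by have := Hmono h; rewrite e ltxx.
Qed.

Lemma teq i j : (t i == t j) = (i == j).
Proof. exact: (inj_eq t_inj). Qed.

Lemma tT i : t i \in T.
Proof. by rewrite HT; apply/imsetP; exists i. Qed.

Lemma inT s : s \in T -> exists i, s = t i.
Proof. by rewrite HT => /imsetP[i _ ->]; exists i. Qed.

Lemma rho_ge0 s : s \in T -> 0 <= rho s.
Proof.
move=> /inT[i ->]; have [i0|ipos] := posnP i.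
  have -> : i = ord0 by apply: val_inj.
  by rewrite Ht0.
by rewrite -Ht0; apply: ltW; apply: Hmono.
Qed.

Lemma Nrho_ge0 x : x \in NTS -> 0 <= Nr x.
Proof. by move=> _; rewrite /Nrho; case: ifP. Qed.

Lemma ND_some s a y : NDt (inl s) (Some a) y = (if y is inl s' then D s a s' else false).
Proof. by case: y => [s'|[]]. Qed.

Lemma exists_ND_some s a : [exists y, NDt (inl s) (Some a) y] = [exists s', D s a s'].
Proof.
apply/existsP/existsP => [[[s'|b] h]|[s' h]]; first by exists s'.
  by case: b h.
by exists (inl s').
Qed.

Lemma ND_none_notT s y : s \notin T -> NDt (inl s) None y = false.
Proof.
move=> sT; case: y => [s'|[]] /=.
- by apply/existsP => -[i /and3P[_ /eqP e _]]; rewrite e tT in sT.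
- by apply/existsP => -[i /andP[_ /eqP e]]; rewrite e tT in sT.
- by apply/eqP => e; rewrite e tT in sT.
Qed.

Lemma ND_none_T i y : NDt (inl (t i)) None y =
  if (i : nat) == 0%N then y == fl
  else (y == fn) || (y == inl (t (inord i.-1))).
Proof.
case: y => [s'|[]] /=.
- apply/existsP/idP => [[j /and3P[j1 /eqP e /eqP->]]|].
    have ij : i = j by apply: t_inj.
    by subst j; rewrite eqn0Ngt j1 /=.
  case: ifP => [_|/negbT]; first by move/eqP.
  rewrite -lt0n => i1 /eqP[e].
  by exists i; rewrite i1 eqxx e eqxx.
- apply/existsP/idP => [[j /andP[j1 /eqP e]]|].
    have ij : i = j by apply: t_inj.
    by subst j; rewrite eqn0Ngt j1.
  case: ifP => // /negbT; rewrite -lt0n => i1 _.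
  by exists i; rewrite i1 eqxx.
- rewrite teq; case: ifP => [i0|i0].
    by apply/eqP; apply: val_inj; apply/eqP.
  by apply/negbTE; apply/eqP => e; rewrite e eqxx in i0.
Qed.


Lemma pick_t i : [pick j | t j == t i] = Some i.
Proof.
case: pickP => [j /eqP /t_inj -> //|H].
by have := H i; rewrite eqxx.
Qed.

Lemma NT_fn : fn \in NTS. Proof. by rewrite !inE eqxx. Qed.
Lemma NT_fl : fl \in NTS. Proof. by rewrite !inE eqxx orbT. Qed.
Lemma NT_inl s : (inl s : NS S) \notin NTS. Proof. by rewrite !inE. Qed.

Lemma ord0_nat (i : 'I_n.+1) : (i : nat) == 0%N -> i = ord0.
Proof. by move/eqP => h; apply: val_inj. Qed.

Lemma pred_lt (i : 'I_n.+1) : (i : nat) != 0%N ->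
  ((inord i.-1 : 'I_n.+1) < i)%N /\ (inord (n':=n) i.-1 : nat) = i.-1.
Proof.
move=> i0; have hk : (i.-1 < n.+1)%N by apply: leq_ltn_trans (leq_pred i) (ltn_ord i).
rewrite inordK //; split => //.
by rewrite prednK // lt0n.
Qed.

Lemma Habs' s a : s \in T -> [exists s', D s a s'] = false.
Proof.
by move=> sT; apply/negbTE/existsP => -[s' d]; move: (Habs a s' sT); rewrite d.
Qed.

Section DirNM.
Variable val : S -> A -> S -> RR.
Hypothesis Hgp : graph_preserving D T val.
Variables (h : S -> RR) (σ : {ffun S -> A}) (r : S -> nat).
Hypothesis Hc : IsChar D T rho z val h σ r.

Lemma hT x : x \in T -> h x = wt rho x.
Proof. by case: Hc => _ H _ _ _; apply: H. Qed.
Lemma h_ge0 x : 0 <= h x.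
Proof. by case: Hc => H _ _ _ _; apply: H. Qed.
Lemma h_z : h z = 0.
Proof. by rewrite hT ?tT // /wt Ht0 rmorph0. Qed.

Definition cst : RR := (1 + \sum_(x in T) wt rho x)^-1.

Lemma sumw_ge0 : 0 <= \sum_(x in T) wt rho x.
Proof. by apply: sumr_ge0 => x xT; rewrite /wt ler0q rho_ge0. Qed.

Lemma cst_gt0 : 0 < cst.
Proof. by rewrite /cst invr_gt0; have := sumw_ge0; lra. Qed.

Lemma ch_lt1 x : x \in T -> cst * h x < 1.
Proof.
move=> xT; rewrite hT // /cst mulrC ltr_pdivrMr; last by have := sumw_ge0; lra.
have : wt rho x <= \sum_(y in T) wt rho y.
  rewrite (bigD1 x) //= lerDl; apply: sumr_ge0 => y /andP[yT _].
  by rewrite /wt ler0q rho_ge0.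
lra.
Qed.

Definition gp (x y : S) : RR := (cst * h x - cst * h y) / (1 - cst * h y).

Lemma gp_bounds (i : 'I_n.+1) : (i : nat) != 0%N ->
  0 < gp (t i) (t (inord i.-1)) < 1.
Proof.
move=> i0; have [lt _] := pred_lt i0.
have hlt : h (t (inord i.-1)) < h (t i).
  by rewrite !hT ?tT // /wt ltr_rat; apply: Hmono.
have b1 := ch_lt1 (tT (inord i.-1)); have a1 := ch_lt1 (tT i).
have c0 := cst_gt0.
have hl : cst * h (t (inord i.-1)) < cst * h (t i) by rewrite ltr_pM2l.
rewrite /gp; apply/andP; split.
  by apply: divr_gt0; lra.
by rewrite ltr_pdivrMr; lra.
Qed.

Definition valN (x : NS S) (b : NA A) (y : NS S) : RR :=
  match x, b with
  | inl s, Some a => if y is inl s' then val s a s' else 0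
  | inl s, None =>
      match [pick i | t i == s] with
      | Some i => if (i : nat) == 0%N then (y == fl)%:R
                  else (y == fn)%:R * gp s (t (inord i.-1)) +
                       (y == inl (t (inord i.-1)))%:R * (1 - gp s (t (inord i.-1)))
      | None => 0
      end
  | inr _, _ => 0
  end.

Lemma fn_inl x : (fn == inl x) = false. Proof. by []. Qed.
Lemma fl_inl x : (fl == inl x) = false. Proof. by []. Qed.
Lemma fl_fn : (fl == fn) = false. Proof. by []. Qed.

Lemma HgpN : graph_preserving NDt NTS valN.
Proof.
move=> [s|b] [a|] xT Hex.
- rewrite exists_ND_some in Hex.
  have sT : s \notin T by apply/negP => sT; rewrite Habs' in Hex.
  have [h1 h2 h3] := @Hgp s a sT Hex.
  split.
  + by move=> [s'|b]; rewrite ND_some //=; exact: h1.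
  + by move=> [s'|b]; rewrite ND_some //=; exact: h2.
  + by rewrite big_sumType /= [X in _ + X]big1 ?addr0.
- have sT : s \in T.
    apply/negPn/negP => sT; case/existsP: Hex => y.
    by rewrite ND_none_notT.
  have [i ei] := inT sT; subst s.
  rewrite /valN pick_t.
  case: (boolP ((i : nat) == 0%N)) => i0.
    split.
    + by move=> y; rewrite ND_none_T i0 => /eqP ->; rewrite eqxx ltr01.
    + by move=> y; rewrite ND_none_T i0 => /negbTE ->.
    + by under eq_bigr do rewrite -[_%:R]mulr1; rewrite sum_dirac_c.
  have /andP[q0 q1] := gp_bounds i0.
  split.
  + move=> y; rewrite ND_none_T (negbTE i0) => /orP[/eqP->|/eqP->].
      by rewrite eqxx fn_inl mul1r mul0r addr0.
    by rewrite eqxx /= mul0r add0r mul1r subr_gt0.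
  + move=> y; rewrite ND_none_T (negbTE i0) negb_or => /andP[/negbTE-> /negbTE->].
    by rewrite !mul0r addr0.
  + by rewrite big_split /= !sum_dirac_c addrC subrK.
- by clear Hex; move: xT; case: b; rewrite !inE.
- by clear Hex; move: xT; case: b; rewrite !inE.
Qed.

Definition hN (x : NS S) : RR := match x with inl s => cst * h s | inr b => if b then 1 else 0 end.

Definition σN : {ffun NS S -> NA A} :=
  [ffun x => match x with inl s => if s \in T then None else Some (σ s) | inr _ => None end].

Definition rN (x : NS S) : nat :=
  match x with inl s => if s \in T then 0%N else (r s).+1 | inr _ => 0%N end.

Lemma QM_T s a : s \in T -> Qf D z val h s a = 0.
Proof.
move=> sT; rewrite /Qf /Defs.row Habs' //.
by rewrite sum_dirac h_z.
Qed.

Lemma QN_some s a : Qf NDt fl valN hN (inl s) (Some a) = cst * Qf D z val h s a.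
Proof.
rewrite /Qf /Defs.row exists_ND_some.
case: (boolP [exists s', D s a s']) => Hex.
  rewrite big_sumType /= [X in _ + X]big1 ?addr0; last by move=> b _; rewrite mul0r.
  by rewrite mulr_sumr; apply: eq_bigr => s' _; rewrite mulrCA.
by rewrite !sum_dirac h_z mulr0.
Qed.

Lemma QN_none_notT s : s \notin T -> Qf NDt fl valN hN (inl s) None = 0.
Proof.
move=> sT; rewrite /Qf /Defs.row.
have -> : [exists y, NDt (inl s) None y] = false.
  by apply/negbTE/existsP => -[y]; rewrite ND_none_notT.
by rewrite sum_dirac.
Qed.

Lemma QN_none_T (i : 'I_n.+1) : Qf NDt fl valN hN (inl (t i)) None = cst * h (t i).
Proof.
rewrite /Qf /Defs.row.
have -> : [exists y, NDt (inl (t i)) None y].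
  apply/existsP; case: (boolP ((i : nat) == 0%N)) => i0.
    by exists fl; rewrite ND_none_T i0.
  by exists fn; rewrite ND_none_T (negbTE i0) eqxx.
rewrite /valN pick_t; case: (boolP ((i : nat) == 0%N)) => i0.
  by rewrite sum_dirac /= (ord0_nat i0) h_z mulr0.
under eq_bigr do rewrite mulrDl.
rewrite big_split /=.
under eq_bigr do rewrite -mulrA.
rewrite sum_dirac.
under [X in _ + X = _]eq_bigr do rewrite -mulrA.
rewrite sum_dirac /= mulr1.
have b1 := ch_lt1 (tT (inord i.-1)).
rewrite /gp; field; lra.
Qed.

Lemma IsCharN : IsChar NDt NTS Nr fl valN hN σN rN.
Proof.
have c0 := cst_gt0.
split.
- move=> [s|[]] //=; apply: mulr_ge0; [exact: ltW|exact: h_ge0].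
- move=> [s|[]] //= xT; first by move: (NT_inl s); rewrite xT.
    by rewrite /wt /Nrho eqxx rmorph1.
  by rewrite /wt /Nrho fl_fn rmorph0.
- move=> [s|b] [a|] xT; last 2 first.
  + by move: xT; case: b; rewrite !inE.
  + by move: xT; case: b; rewrite !inE.
  + rewrite QN_some /=; case: (boolP (s \in T)) => sT.
      by rewrite QM_T // mulr0; apply: mulr_ge0; [exact: ltW|exact: h_ge0].
    by rewrite ler_pM2l //; case: Hc => _ _ H3 _ _; exact: H3.
  + case: (boolP (s \in T)) => sT.
      by have [i ->] := inT sT; rewrite QN_none_T.
    by rewrite QN_none_notT //=; apply: mulr_ge0; [exact: ltW|exact: h_ge0].
- move=> [s|b] xT; last by clear -xT; move: xT; case: b; rewrite !inE.
  rewrite /σN ffunE; case: ifP => sT.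
    by have [i ->] := inT sT; rewrite QN_none_T.
  by rewrite QN_some /=; case: Hc => _ _ _ H4 _; rewrite H4 // sT.
- move=> [s|b] xT hpos; last by clear -xT; move: xT; case: b; rewrite !inE.
  rewrite /σN ffunE; case: ifP => sT.
    have [i ei] := inT sT; subst s.
    have i0 : (i : nat) != 0%N.
      apply/negP => /ord0_nat ei; move: hpos; rewrite /= ei h_z mulr0 ltxx.
      by [].
    exists fn; split; last by left; exact: NT_fn.
    rewrite /Defs.row.
    have -> : [exists y, NDt (inl (t i)) None y].
      by apply/existsP; exists fn; rewrite ND_none_T (negbTE i0) eqxx.
    rewrite /valN pick_t (negbTE i0) eqxx fn_inl mul1r mul0r addr0.
    by have /andP[] := gp_bounds i0.
  have hs : 0 < h s by move: hpos; rewrite /= pmulr_rgt0.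
  case: Hc => _ _ _ _ H5.
  have [s' [hp hc]] := H5 s (negbT sT) hs.
  case: (boolP [exists s'', D s (σ s) s'']) => Hex; last first.
    exists fl; split; last by left; exact: NT_fl.
    by rewrite /Defs.row exists_ND_some (negbTE Hex) eqxx ltr01.
  exists (inl s'); split.
    by move: hp; rewrite /Defs.row exists_ND_some Hex.
  right; case: hc => [s'T|[h0|rlt]].
  + by right; rewrite /= s'T sT.
  + by left; rewrite /= h0 mulr0.
  + right; rewrite /= sT; case: (s' \in T) => //.
Qed.

Lemma key_NM (u : vertex S A) : is_vertex T u ->
  Rstar NDt NTS Nr fl valN (embed_vertex u) = cst * Rstar D T rho z val u.
Proof.
have [RN1 RN2] := IsChar_Rstar HgpN Nrho_ge0 IsCharN.
have [RM1 RM2] := IsChar_Rstar Hgp rho_ge0 Hc.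
case: u => [s|[s a]] /= hv; first by rewrite RN1 RM1.
by rewrite RN2 ?NT_inl // RM2 // QN_some.
Qed.

End DirNM.

Lemma dir_NM (v : vertex S A) (W : {set vertex S A}) : is_vertex T v -> {subset W <= is_vertex T} ->
  never_worse NDt NTS Nr fl (embed_vertex v) (embed_set W) ->
  never_worse D T rho z v W.
Proof.
move=> vV WV HN val Hgp.
have [a0 _] := exA.
have [h [σ [r Hc]]] := @IsChar_exists _ _ D T rho z val Hgp rho_ge0 a0.
have [wN wNW hw] := HN _ (HgpN Hgp Hc).
case/imsetP: wNW => w wW ->{wN} in hw.
exists w => //.
rewrite (key_NM Hgp Hc vV) (key_NM Hgp Hc (WV w wW)) in hw.
by rewrite -(ler_pM2l (cst_gt0)).
Qed.


Section DirMN.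
Variable valN : NS S -> NA A -> NS S -> RR.
Hypothesis HgpN : graph_preserving NDt NTS valN.
Variables (hN : NS S -> RR) (σN : {ffun NS S -> NA A}) (rN : NS S -> nat).
Hypothesis HcN : IsChar NDt NTS Nr fl valN hN σN rN.

Local Notation QN := (Qf NDt fl valN).

Lemma hN_ge0 x : 0 <= hN x. Proof. by case: HcN => H _ _ _ _; apply: H. Qed.
Lemma hN_fl : hN fl = 0.
Proof. by case: HcN => _ H _ _ _; rewrite H ?NT_fl // /wt /Nrho fl_fn rmorph0. Qed.
Lemma hN_fn : hN fn = 1.
Proof. by case: HcN => _ H _ _ _; rewrite H ?NT_fn // /wt /Nrho eqxx rmorph1. Qed.
Lemma HsupN x b : x \notin NTS -> QN hN x b <= hN x.
Proof. by case: HcN => _ _ H _ _; apply: H. Qed.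
Lemma HharmN x : x \notin NTS -> QN hN x (σN x) = hN x.
Proof. by case: HcN => _ _ _ H _; apply: H. Qed.

Lemma QfN_ex x b f : [exists y, NDt x b y] -> QN f x b = \sum_y valN x b y * f y.
Proof. by move=> Hex; apply: eq_bigr => y _; rewrite /Defs.row Hex. Qed.

Lemma QfN_noex x b f : ~~ [exists y, NDt x b y] -> QN f x b = f fl.
Proof.
move=> Hex; rewrite -(sum_dirac fl f); apply: eq_bigr => y _.
by rewrite /Defs.row (negbTE Hex).
Qed.

Lemma QN_some_noD s a : ~~ [exists s', D s a s'] -> QN hN (inl s) (Some a) = 0.
Proof. by move=> h; rewrite QfN_noex ?exists_ND_some // hN_fl. Qed.

Lemma QN_some_T s a : s \in T -> QN hN (inl s) (Some a) = 0.
Proof. by move=> sT; rewrite QN_some_noD // Habs'. Qed.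

Lemma QN_none_notT' s : s \notin T -> QN hN (inl s) None = 0.
Proof.
move=> sT; rewrite QfN_noex ?hN_fl //.
by apply/existsP => -[y]; rewrite ND_none_notT.
Qed.

Lemma valN_off x b y : x \notin NTS -> [exists y, NDt x b y] -> ~~ NDt x b y -> valN x b y = 0.
Proof. by move=> xN Hex hy; have [_ h2 _] := HgpN xN Hex; apply: h2. Qed.

Lemma hN_z : hN (inl z) = 0.
Proof.
rewrite -(HharmN (NT_inl z)); case: (σN (inl z)) => [a|].
  by rewrite QN_some_T ?tT.
have Hex : [exists y, NDt (inl z) None y] by apply/existsP; exists fl; rewrite ND_none_T eqxx.
rewrite QfN_ex //; apply: big1 => y _.
case: (boolP (y == fl)) => [/eqP->|yf]; first by rewrite hN_fl mulr0.
by rewrite valN_off ?NT_inl ?mul0r // ND_none_T eqxx.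
Qed.

Lemma gadget (i : 'I_n.+1) : (i : nat) != 0%N ->
  exists p, [/\ 0 < p, p < 1 &
    hN (inl (t i)) = p + (1 - p) * hN (inl (t (inord i.-1)))].
Proof.
move=> i0; set tp := t (inord i.-1).
have Hex : [exists y, NDt (inl (t i)) None y].
  by apply/existsP; exists fn; rewrite ND_none_T (negbTE i0) eqxx.
have [h1 h2 h3] := HgpN (NT_inl (t i)) Hex.
have nd y : NDt (inl (t i)) None y = (y == fn) || (y == inl tp).
  by rewrite ND_none_T (negbTE i0).
have tpfn : (inl tp == fn) = false by [].
set p := valN (inl (t i)) None fn; set q := valN (inl (t i)) None (inl tp).
have p0 : 0 < p by apply: h1; rewrite nd eqxx.
have q0 : 0 < q by apply: h1; rewrite nd eqxx orbT.
have other y : y != fn -> y != inl tp -> valN (inl (t i)) None y = 0.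
  by move=> y1 y2; apply: h2; rewrite nd negb_or y1 y2.
have pq : p + q = 1.
  rewrite -h3 (bigD1 fn) //= (bigD1 (inl tp)) //= ?tpfn // big1 ?addr0 //.
  by move=> y /andP[y1 y2]; apply: other.
have QNone : QN hN (inl (t i)) None = p + (1 - p) * hN (inl tp).
  rewrite QfN_ex // (bigD1 fn) //= (bigD1 (inl tp)) //= ?tpfn // big1 ?addr0.
    have -> : 1 - p = q by lra.
    by rewrite hN_fn mulr1.
  by move=> y /andP[y1 y2]; rewrite other // mul0r.
exists p; split => //; first by lra.
rewrite -QNone -(HharmN (NT_inl (t i))).
case E: (σN (inl (t i))) => [a|] //.
have := HsupN None (NT_inl (t i)).
rewrite -(HharmN (NT_inl (t i))) E QN_some_T ?tT // QNone.
have := hN_ge0 (inl tp); have q1 : 0 < 1 - p by lra.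
move=> hge; have : 0 <= (1 - p) * hN (inl tp) by apply: mulr_ge0; lra.
lra.
Qed.

Definition Yv (k : nat) : RR := hN (inl (t (inord k))).
Definition Rv (k : nat) : RR := wt rho (t (inord k)).

Lemma Yv0 : Yv 0 = 0.
Proof. by rewrite /Yv (_ : inord 0 = ord0) ?hN_z //; apply: val_inj; rewrite /= inordK. Qed.

Lemma Rv0 : Rv 0 = 0.
Proof.
by rewrite /Rv (_ : inord 0 = ord0) ?/wt ?Ht0 ?rmorph0 //; apply: val_inj; rewrite /= inordK.
Qed.

Lemma Yv_step k : (k < n)%N ->
  exists p, [/\ 0 < p, p < 1 & Yv k.+1 = p + (1 - p) * Yv k].
Proof.
move=> kn; have kn1 : (k.+1 < n.+1)%N by [].
have i0 : ((inord k.+1 : 'I_n.+1) : nat) != 0%N by rewrite inordK.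
have [p [p0 p1 hp]] := gadget i0.
exists p; split => //; rewrite /Yv hp.
by rewrite inordK.
Qed.

Lemma Yv_lt1 k : (k <= n)%N -> Yv k < 1.
Proof.
elim: k => [|k IH] kn; first by rewrite Yv0 ltr01.
have [p [p0 p1 ->]] := Yv_step kn.
have h := IH (ltnW kn).
have : (1 - p) * Yv k < (1 - p) * 1 by rewrite ltr_pM2l // subr_gt0.
lra.
Qed.

Lemma Yv_inc k : (k < n)%N -> Yv k < Yv k.+1.
Proof.
move=> kn; have [p [p0 p1 ->]] := Yv_step kn.
have h := Yv_lt1 (ltnW kn).
have : 0 < p * (1 - Yv k) by rewrite mulr_gt0 // subr_gt0.
lra.
Qed.

Lemma Rv_inc k : (k < n)%N -> Rv k < Rv k.+1.
Proof.
move=> kn; rewrite /Rv /wt ltr_rat; apply: Hmono.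
by rewrite !inordK // ltnS ltnW.
Qed.

Local Notation ph := (phi n Yv Rv).

Lemma ph_strict u v : u < v -> ph u < ph v.
Proof. exact: (phi_strict Yv_inc Rv_inc). Qed.
Lemma ph_le u v : u <= v -> ph u <= ph v.
Proof. exact: (phi_le Yv_inc Rv_inc). Qed.
Lemma ph_le_rev u v : ph u <= ph v -> u <= v.
Proof. exact: (phi_le_rev Yv_inc Rv_inc). Qed.
Lemma ph0 : ph 0 = 0.
Proof. exact: (phi0 Yv0 Rv0 Yv_inc). Qed.
Lemma ph_t (i : 'I_n.+1) : ph (hN (inl (t i))) = wt rho (t i).
Proof.
have := phi_interp Yv0 Rv0 Yv_inc (ltn_ord i : (i <= n)%N).
by rewrite /Yv /Rv inord_val.
Qed.

Lemma rowM_exists (sa : S * A) : exists p : S -> RR,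
  sa.1 \notin T -> [exists s', D sa.1 sa.2 s'] ->
  [/\ forall s', D sa.1 sa.2 s' -> 0 < p s', forall s', ~~ D sa.1 sa.2 s' -> p s' = 0,
      \sum_s' p s' = 1 &
      \sum_s' p s' * ph (hN (inl s')) = ph (QN hN (inl sa.1) (Some sa.2))].
Proof.
case: sa => s a /=.
case: (boolP (s \in T)) => sT; first by exists (fun _ => 0).
case: (boolP [exists s', D s a s']) => Hex; last by exists (fun _ => 0).
have HexN : [exists y, NDt (inl s) (Some a) y] by rewrite exists_ND_some.
have [h1 h2 h3] := HgpN (NT_inl s) HexN.
pose q s' := valN (inl s) (Some a) (inl s').
have qP s' : D s a s' -> 0 < q s' by move=> d; apply: h1; rewrite ND_some.
have qN s' : ~~ D s a s' -> q s' = 0 by move=> d; apply: h2; rewrite ND_some.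
have inr0 b : valN (inl s) (Some a) (inr b) = 0 by apply: h2; rewrite ND_some.
have q1 : \sum_s' q s' = 1.
  by rewrite -h3 big_sumType /= [X in _ = _ + X]big1 ?addr0.
have [p [pP pN p1 pe]] := @realize_avg S (D s a) q (fun s' => hN (inl s')) ph ph_strict qP qN q1.
exists p => _ _; split => //.
rewrite pe QfN_ex // big_sumType /= [X in _ = ph (_ + X)]big1 ?addr0 //.
by move=> b _; rewrite inr0 mul0r.
Qed.

Variable a0 : A.

Definition fM := projT1 (choice rowM_exists).
Definition valM (s : S) (a : A) (s' : S) : RR := fM (s, a) s'.
Lemma valM_spec s a : s \notin T -> [exists s', D s a s'] ->
  [/\ forall s', D s a s' -> 0 < valM s a s', forall s', ~~ D s a s' -> valM s a s' = 0,
      \sum_s' valM s a s' = 1 &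
      \sum_s' valM s a s' * ph (hN (inl s')) = ph (QN hN (inl s) (Some a))].
Proof. exact: (projT2 (choice rowM_exists) (s, a)). Qed.

Lemma HgpM : graph_preserving D T valM.
Proof. by move=> s a sT Hex; have [h1 h2 h3 _] := valM_spec sT Hex; split. Qed.

Definition hM (s : S) : RR := ph (hN (inl s)).
Definition σM : {ffun S -> A} := [ffun s => if σN (inl s) is Some a then a else a0].
Definition rM (s : S) : nat := rN (inl s).

Lemma hM_ge0 s : 0 <= hM s.
Proof. by rewrite -ph0; apply: ph_le; exact: hN_ge0. Qed.

Lemma QM_eq s a : s \notin T -> Qf D z valM hM s a = ph (QN hN (inl s) (Some a)).
Proof.
move=> sT; case: (boolP [exists s', D s a s']) => Hex.
  have [_ _ _ <-] := valM_spec sT Hex.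
  by apply: eq_bigr => s' _; rewrite /Defs.row Hex.
rewrite QN_some_noD // ph0.
transitivity (\sum_s' (s' == z)%:R * hM s').
  by apply: eq_bigr => s' _; rewrite /Defs.row (negbTE Hex).
by rewrite sum_dirac /hM hN_z ph0.
Qed.

Lemma IsCharM : IsChar D T rho z valM hM σM rM.
Proof.
split.
- exact: hM_ge0.
- by move=> x /inT[i ->]; rewrite /hM ph_t.
- by move=> s a sT; rewrite QM_eq //; apply: ph_le; apply: HsupN; exact: NT_inl.
- move=> s sT; rewrite /σM ffunE.
  have hh := HharmN (NT_inl s).
  case E: (σN (inl s)) hh => [a|] hh.
    by rewrite QM_eq // hh.
  rewrite QN_none_notT' // in hh.
  have hs : hM s = 0 by rewrite /hM -hh ph0.
  have h3 : Qf D z valM hM s a0 <= hM s.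
    by rewrite QM_eq // /hM; apply: ph_le; apply: HsupN; exact: NT_inl.
  rewrite hs in h3 *; apply/eqP; rewrite eq_le h3 /=.
  apply: sumr_ge0 => s' _; apply: mulr_ge0; last exact: hM_ge0.
  exact: (Pr_ge0 z HgpM _ _ sT).
- move=> s sT hpos.
  have hNpos : 0 < hN (inl s).
    rewrite lt_neqAle hN_ge0 andbT; apply/eqP => e; move: hpos.
    by rewrite /hM -e ph0 ltxx.
  case: HcN => _ _ _ _ H5.
  have [x' [hp hc]] := H5 _ (NT_inl s) hNpos.
  have hh := HharmN (NT_inl s).
  rewrite /σM ffunE.
  case E: (σN (inl s)) hp hh => [a|] hp hh; last first.
    by move: hNpos; rewrite -hh QN_none_notT' // ltxx.
  case: (boolP [exists s', D s a s']) => Hex; last first.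
    by move: hNpos; rewrite -hh QN_some_noD // ltxx.
  have HexN : [exists y, NDt (inl s) (Some a) y] by rewrite exists_ND_some.
  move: hp; rewrite /Defs.row HexN => hp.
  case: x' hp hc => [s'|b] hp hc; last first.
    by move: hp; rewrite valN_off ?NT_inl // ?ltxx // ND_some.
  have d : D s a s'.
    apply/negPn/negP => nd; move: hp; rewrite valN_off ?NT_inl // ?ltxx //.
  exists s'; split.
    by rewrite ?/Defs.row Hex; have [h1 _ _ _] := valM_spec sT Hex; apply: h1.
  case: hc => [xN|[h0|rlt]].
  + by move: (NT_inl s'); rewrite xN.
  + by right; left; rewrite /hM h0 ph0.
  + by right; right.
Qed.

Lemma key_MN (u : vertex S A) : is_vertex T u ->
  Rstar D T rho z valM u = ph (Rstar NDt NTS Nr fl valN (embed_vertex u)).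
Proof.
have [RN1 RN2] := IsChar_Rstar HgpN Nrho_ge0 HcN.
have [RM1 RM2] := IsChar_Rstar HgpM rho_ge0 IsCharM.
case: u => [s|[s a]] /= hv; first by rewrite RN1 RM1.
by rewrite RN2 ?NT_inl // RM2 // QM_eq.
Qed.

End DirMN.

Lemma dir_MN (v : vertex S A) (W : {set vertex S A}) : is_vertex T v -> {subset W <= is_vertex T} ->
  never_worse D T rho z v W ->
  never_worse NDt NTS Nr fl (embed_vertex v) (embed_set W).
Proof.
move=> vV WV HM valN HgpN.
have [hN [σN [rN HcN]]] := @IsChar_exists _ _ NDt NTS Nr fl valN HgpN Nrho_ge0 None.
have [a0 _] := exA.
have [w wW hw] := HM _ (HgpM HgpN HcN).
exists (embed_vertex w); first by apply/imsetP; exists w.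
rewrite (key_MN HgpN HcN a0 vV) (key_MN HgpN HcN a0 (WV w wW)) in hw.
exact: (ph_le_rev HgpN HcN hw).
Qed.

End Main.

Unset Implicit Arguments.

Theorem theorem2 (S A : finType) (D : S -> A -> S -> bool) (T : {set S})
    (rho : S -> rat) (n : nat) (t : 'I_n.+1 -> S)
    (HA : (0 < #|A|)%N)
    (Habs : targets_absorbing D T)
    (HT : T = [set t i | i : 'I_n.+1])
    (Ht0 : rho (t ord0) = 0)
    (Hmono : forall i j : 'I_n.+1, (i < j)%N -> rho (t i) < rho (t j))
    (v : vertex S A) (W : {set vertex S A}) :
  is_vertex T v ->
  {subset W <= is_vertex T} ->
  (never_worse D T rho (t ord0) v W <->
   never_worse (ND D t) (NT S) (Nrho (S:=S)) (fail S)
     (embed_vertex v) (embed_set W)).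
Proof.
move=> vV WV; split.
  by apply: dir_MN.
by apply: dir_NM.
Qed.
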